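(* For any weight matrix $V\in\mathbb{R}^{2p\times(d+1)}$, $\lVert\nabla_VL\rVert\le\sqrt{2p}\,\min\{L(V),1\}$.
   Context: $p\ge1$, $h=1/p$. Huberized ReLU: $\phi(z)=0$ for $z<0$, $z^2/(2h)$ for $z\in[0,h]$, $z-h/2$ for $z>h$. Data $(x_1,y_1),\ldots,(x_n,y_n)$ with $x_s\in\mathbb{R}^{d+1}$, $\lVert x_s\rVert=1$, $y_s\in\{-1,1\}$. For $V$ with rows $v_1,\ldots,v_{2p}$ and fixed $u_1=\cdots=u_p=1$, $u_{p+1}=\cdots=u_{2p}=-1$: $f_V(x)=\sum_{i=1}^{2p}u_i\phi(v_i\cdot x)$, $L(V)=\frac1n\sum_s\ln(1+\exp(-y_sf_V(x_s)))$. $\lVert\cdot\rVert$ is the Frobenius (Euclidean) norm. *)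

(* Defs.v *)
From HB Require Import structures.
From mathcomp Require Import all_boot all_order all_algebra.
From mathcomp Require Import all_classical all_reals all_analysis.
Set Implicit Arguments. Unset Strict Implicit. Unset Printing Implicit Defensive.
Import Order.TTheory GRing.Theory Num.Theory.
Import numFieldNormedType.Exports.
Local Open Scope ring_scope.

Section Defs.
Variable R : realType.

Definition hphi (p : nat) (z : R) : R :=
  let h := (p%:R)^-1 in
  if z < 0 then 0 else if z <= h then z ^+ 2 / (2 * h) else z - h / 2.

(* fixed output weights: u_i = 1 for i < p, -1 for p <= i < 2p *)
Definition uw (p : nat) (i : 'I_(2 * p)) : R := if (i < p)%N then 1 else -1.

Definition fV (p d : nat) (V : 'M[R]_(2 * p, d.+1)) (x : 'rV[R]_d.+1) : R :=
  \sum_(i < 2 * p) uw i * hphi p (\sum_(j < d.+1) V i j * x 0 j).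

Definition Loss (p d n : nat) (X : 'I_n -> 'rV[R]_d.+1) (Y : 'I_n -> R)
  (V : 'M[R]_(2 * p, d.+1)) : R :=
  (n%:R)^-1 * \sum_(s < n) ln (1 + expR (- (Y s * fV V (X s)))).

Definition frob (m k : nat) (A : 'M[R]_(m, k)) : R :=
  Num.sqrt (\sum_(i < m) \sum_(j < k) A i j ^+ 2).

Definition gradM (m k : nat) (F : 'M[R]_(m, k) -> R) (V : 'M[R]_(m, k))
  : 'M[R]_(m, k) :=
  \matrix_(i < m, j < k) ('D_(delta_mx i j) F V).

End Defs.

(* Main.v *)
Require Import Defs.
From HB Require Import structures.
From mathcomp Require Import all_boot all_order all_algebra.
From mathcomp Require Import all_classical all_reals all_analysis.
From mathcomp Require Import ring lra.
Import Order.TTheory GRing.Theory Num.Theory.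
Import numFieldNormedType.Exports.
Local Open Scope ring_scope.
Local Open Scope classical_set_scope.
Set Implicit Arguments. Unset Strict Implicit. Unset Printing Implicit Defensive.


Section S1.
Variable R : realType.

Lemma is_derive_bound (f : R -> R) z a C : 0 < C ->
  (forall t, `|f (t + z) - f z - a * t| <= C * t^+2) -> is_derive z 1 f a.
Proof.
move=> C0 Hb.
have H : (fun t => t^-1 *: ((f \o shift z) (t *: 1) - f z)) @ 0^' --> a.
  apply/cvgrPdist_le => e e0.
  near=> t.
  have tn0 : t != 0 by near: t; exact: nbhs_dnbhs_neq.
  have te : `|t| < e / C.
    near: t; apply: nbhs_dnbhs; apply: (@nbhs0_lt R R); exact: divr_gt0.
  rewrite /= /shift [t *: 1]mulr1.
  have -> : a - t^-1 * (f (t + z) - f z) = - (t^-1 * (f (t + z) - f z - a * t)).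
    by field.
  rewrite normrN normrM normfV.
  have u0 : 0 < `|t| by rewrite normr_gt0.
  apply: le_trans; first apply: (ler_wpM2l _ (Hb t)).
    by rewrite invr_ge0 ltW.
  rewrite -real_normK ?num_real //.
  have -> : `|t|^-1 * (C * `|t| ^+ 2) = `|t| * C by field; rewrite gt_eqF.
  by rewrite -ler_pdivlMr // ltW.
apply: DeriveDef; first by apply/cvg_ex; exists a.
exact: cvg_lim.
Unshelve. all: by end_near.
Qed.
End S1.

Section S2.
Variable R : realType.
Definition Hh (h z : R) : R :=
  if z < 0 then 0 else if z <= h then z ^+ 2 / (2 * h) else z - h / 2.
Definition gh (h z : R) : R :=
  if z < 0 then 0 else if z <= h then z / h else 1.

Lemma Hh_bound h z t : 0 < h ->
  `|Hh h (t + z) - Hh h z - gh h z * t| <= h^-1 * t ^+ 2.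
Proof.
move=> h0.
suff H : `|h * (Hh h (t + z) - Hh h z - gh h z * t)| <= t ^+ 2.
  rewrite normrM gtr0_norm // in H.
  by rewrite [h^-1 * _]mulrC ler_pdivlMr // [_ * h]mulrC.
have hH : forall x, h * Hh h x =
    (if x < 0 then 0 else if x <= h then x ^+ 2 / 2 else h * x - h ^+ 2 / 2).
  move=> x; rewrite /Hh; case: ifP => _; first by rewrite mulr0.
  by case: ifP => _; field; rewrite ?gt_eqF ?pnatr_eq0 //; apply/andP; split; rewrite ?gt_eqF ?pnatr_eq0.
have hg : h * gh h z = (if z < 0 then 0 else if z <= h then z else h).
  rewrite /gh; case: ifP => _; first by rewrite mulr0.
  by case: ifP => _; [field; rewrite ?gt_eqF | rewrite mulr1].
have -> : h * (Hh h (t + z) - Hh h z - gh h z * t) =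
   h * Hh h (t + z) - h * Hh h z - h * gh h z * t by ring.
rewrite !hH hg.
set w := t + z. have -> : t = w - z by rewrite /w addrK.
clearbody w.
case: (ltP w 0) => w0; case: (ltP z 0) => z0; case: (leP w h) => wh; case: (leP z h) => zh; rewrite ler_norml;
  apply/andP; split; first [nra | (have := sqr_ge0 (w - z)); nra].
Qed.
End S2.

Section P.
Variable R : realType.
Variables m k : nat.
Local Notation M := 'M[R]_(m, k).

Definition PD (F : M -> R) (V v : M) (df : R) :=
  differentiable F V /\ 'D_v F V = df.

Lemma PD_coord i j V v : PD (fun N : M => N i j) V v (v i j).
Proof.
split; first exact: differentiable_coord.
rewrite /derive; apply/lim_near_cst => //=.
near=> t.
have tn0 : t != 0 by near: t; exact: nbhs_dnbhs_neq.
by rewrite !mxE addrK [_ *: _]mulKf.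
Unshelve. all: by end_near.
Qed.

Lemma PD_sum n (f : 'I_n -> M -> R) V v df :
  (forall i, PD (f i) V v (df i)) ->
  PD (fun N => \sum_(i < n) f i N) V v (\sum_(i < n) df i).
Proof.
move=> H; rewrite -fct_sumE; split.
  by apply: differentiable_sum => i; case: (H i).
rewrite derive_sum; last by move=> i; apply: diff_derivable; case: (H i).
by apply: eq_bigr => i _; case: (H i).
Qed.

Lemma PD_mull c F V v df : PD F V v df -> PD (fun N => c * F N) V v (c * df).
Proof.
case=> dF <-; split.
  exact: (@differentiableM _ _ (cst c) F V (differentiable_cst _ _) dF).
rewrite -deriveMl; last exact: diff_derivable.
by [].

Qed.

Lemma PD_mulr c F V v df : PD F V v df -> PD (fun N => F N * c) V v (df * c).
Proof.
move=> /(PD_mull c); rewrite mulrC.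
by rewrite (_ : (fun N => c * F N) = (fun N => F N * c)) // funeqE => N; rewrite mulrC.
Qed.

Lemma PD_comp (g : R -> R) F V v df b :
  PD F V v df -> is_derive (F V) 1 g b -> PD (fun N => g (F N)) V v (b * df).
Proof.
case=> dF <- [dg <-].
have dg' : differentiable g (F V) by apply/derivable1_diffP.
have dgF : differentiable (g \o F) V by apply: differentiable_comp.
split; first exact: dgF.
have e0 : 'D_v (fun N => g (F N)) V = 'd (g \o F) V v by apply: deriveE.
have e1 : 'D_1 g (F V) = 'd g (F V) 1 by apply: deriveE.
have e2 : 'D_v F V = 'd F V v by apply: deriveE.
rewrite e0 e1 e2 diff_comp //=.
rewrite -[X in 'd g (F V) X]mulr1 -[_ * 1]/(_ *: (1:R)) linearZ /=.
by rewrite mulrC.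
Qed.
End P.

Section B4.
Variable R : realType.

Lemma cs_sum n (a b : 'I_n -> R) : (forall s, 0 <= a s) ->
  (\sum_s a s * b s) ^+ 2 <= (\sum_s a s) * (\sum_s a s * b s ^+ 2).
Proof.
move=> a0.
set A := \sum_s a s; set B := \sum_s a s * b s; set C := \sum_s a s * b s ^+ 2.
have A0 : 0 <= A by apply: sumr_ge0.
have key : 0 <= A * (A * C - B ^+ 2).
  have -> : A * (A * C - B ^+ 2) = \sum_s a s * (A * b s - B) ^+ 2.
    have -> : \sum_s a s * (A * b s - B) ^+ 2 =
      \sum_s ((A ^+ 2) * (a s * b s ^+ 2) - (2 * A * B) * (a s * b s) + B ^+ 2 * a s).
      by apply: eq_bigr => s _; ring.
    rewrite big_split /= sumrB -!mulr_sumr -/A -/B -/C; ring.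
  by apply: sumr_ge0 => s _; apply: mulr_ge0 => //; apply: sqr_ge0.
have [A00|Apos] := eqVneq A 0.
  have B0 : B = 0.
    rewrite /B big1 // => s _.
    have : a s = 0 by apply/eqP; move: A00 => /eqP; rewrite psumr_eq0 // => /allP /(_ s); rewrite mem_index_enum => /(_ isT) /implyP; apply.
    by move=> ->; rewrite mul0r.
  by rewrite B0 A00 expr0n /= mul0r.
have A1 : 0 < A by rewrite lt_def Apos A0.
rewrite -subr_ge0; move: key; rewrite pmulr_rge0 //.
Qed.

Lemma row_bound n k (w : 'I_n -> R) (x : 'I_n -> 'I_k -> R) :
  (forall s, \sum_j x s j ^+ 2 = 1) ->
  \sum_j (\sum_s w s * x s j) ^+ 2 <= (\sum_s `|w s|) ^+ 2.
Proof.
move=> hx.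
have step : forall j, (\sum_s w s * x s j) ^+ 2 <=
    (\sum_s `|w s|) * (\sum_s `|w s| * x s j ^+ 2).
  move=> j.
  have cs := @cs_sum n (fun s => `|w s|) (fun s => `|x s j|) (fun s => normr_ge0 _).
  simpl in cs.
  have e : \sum_s `|w s| * `|x s j| ^+ 2 = \sum_s `|w s| * x s j ^+ 2.
    by apply: eq_bigr => s _; rewrite real_normK // num_real.
  rewrite e in cs.
  apply: le_trans cs.
  have h1 : `|\sum_s w s * x s j| <= \sum_s `|w s| * `|x s j|.
    apply: le_trans (ler_norm_sum _ _ _) _.
    by apply: ler_sum => s _; rewrite normrM.
  rewrite -real_normK ?num_real //.
  have := normr_ge0 (\sum_s w s * x s j).
  move: h1; set u := `|_|; set v := \sum_s _; nra.
apply: le_trans (ler_sum _ (fun j _ => step j)) _.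
rewrite -mulr_sumr exchange_big /=.
have e : \sum_s \sum_j `|w s| * x s j ^+ 2 = \sum_s `|w s|.
  by apply: eq_bigr => s _; rewrite -mulr_sumr hx mulr1.
by rewrite e expr2.
Qed.
End B4.

Section B5.
Variable R : realType.

Lemma ln_bound (e : R) : 0 < e -> (1 + e)^-1 * e <= ln (1 + e).
Proof.
move=> e0; set y := 1 + e.
have y0 : 0 < y by rewrite /y; apply: addr_gt0.
have := expR_ge1Dx (- ln y).
rewrite expRN lnK ?posrE //.
have -> : y^-1 * e = 1 - y^-1 by rewrite /y; field; rewrite gt_eqF.
lra.
Qed.

Lemma c_le1 (e : R) : 0 < e -> (1 + e)^-1 * e <= 1.
Proof.
move=> e0; rewrite mulrC -ler_pdivlMr ?mul1r ?invr_gt0 ?addr_gt0 // invrK; lra.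
Qed.

Lemma gh_bound (h z : R) : 0 < h -> 0 <= (if z < 0 then 0 else if z <= h then z / h else 1) <= 1.
Proof.
move=> h0; case: (ltP z 0) => z0 /=; first by rewrite lexx ler01.
case: (leP z h) => zh; last by rewrite ler01 lexx.
apply/andP; split; first by apply: divr_ge0; [exact: z0 | exact: ltW].
by rewrite ler_pdivrMr // mul1r.
Qed.

Lemma sum_delta m k (i : 'I_m) (j : 'I_k) i' (x : 'I_k -> R) :
  \sum_j' (delta_mx i j : 'M[R]_(m, k)) i' j' * x j' = (i' == i)%:R * x j.
Proof.
rewrite (bigD1 j) //= big1 ?addr0; first by rewrite mxE eqxx andbT.
by move=> j' nj; rewrite mxE (negbTE nj) andbF mul0r.
Qed.
End B5.

Section Main.
Variable R : realType.

Lemma PD_addc m k c (F : 'M[R]_(m, k) -> R) V v df :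
  PD F V v df -> PD (fun N => c + F N) V v df.
Proof.
case=> dF <-; split.
  exact: (@differentiableD _ _ _ (cst c) F V (differentiable_cst _ _) dF).
transitivity ('D_v (cst c + F) V); first by [].
rewrite deriveD; last exact: diff_derivable.
  by rewrite derive_cst add0r.
exact: derivable_cst.
Qed.

Lemma hphi_is_derive p (z : R) : (1 <= p)%N ->
  is_derive z (1 : R) (hphi p) (gh (p%:R^-1) z : R).
Proof.
move=> hp.
have h0 : 0 < p%:R^-1 :> R by rewrite invr_gt0 ltr0n.
apply: (@is_derive_bound _ (hphi p) z _ (p%:R^-1)^-1); first by rewrite invr_gt0.
move=> t; exact: Hh_bound.
Qed.

Lemma Loss_PD p d n (hp : (1 <= p)%N) (X : 'I_n -> 'rV[R]_d.+1) (Y : 'I_n -> R)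
  (V v : 'M[R]_(2 * p, d.+1)) :
  PD (Loss X Y) V v
   (n%:R^-1 * \sum_(s < n) ((1 + expR (- (Y s * fV V (X s))))^-1 *
      (expR (- (Y s * fV V (X s))) *
       (- Y s * \sum_(i < 2 * p) uw R i * (gh (p%:R^-1) (\sum_(j < d.+1) V i j * X s 0 j)
             * \sum_(j < d.+1) v i j * X s 0 j))))).
Proof.
apply: (PD_mull _ (F := fun N => \sum_(s < n) ln (1 + expR (- (Y s * fV N (X s)))))).
apply: (PD_sum (f := fun s N => ln (1 + expR (- (Y s * fV N (X s)))))) => s.
apply: (PD_comp (F := fun N => 1 + expR (- (Y s * fV N (X s))))); last first.
  by apply: is_derive1_ln; apply: addr_gt0 => //; apply: expR_gt0.
apply: (PD_addc _ (F := fun N => expR (- (Y s * fV N (X s))))).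
apply: (PD_comp (F := fun N => - (Y s * fV N (X s)))).
have -> : (fun N : 'M[R]_(2 * p, d.+1) => - (Y s * fV N (X s))) = (fun N => - Y s * fV N (X s)).
  by rewrite funeqE => N; rewrite mulNr.
apply: (PD_mull _ (F := fun N => fV N (X s))).
apply: (PD_sum (f := fun i N => uw R i * hphi p (\sum_(j < d.+1) N i j * X s 0 j))) => i.
apply: (PD_mull _ (F := fun N => hphi p (\sum_(j < d.+1) N i j * X s 0 j))).
apply: (PD_comp (F := fun N => \sum_(j < d.+1) N i j * X s 0 j)); last exact: hphi_is_derive.
apply: (PD_sum (f := fun j N => N i j * X s 0 j)) => j.
apply: (PD_mulr _ (F := fun N => N i j)).
exact: PD_coord.
Qed.

End Main.

Theorem lemma3 (R : realType) (p d n : nat) (hp : (1 <= p)%N) (hn : (0 < n)%N)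
  (X : 'I_n -> 'rV[R]_d.+1) (Y : 'I_n -> R)
  (hX : forall s, frob (X s) = 1)
  (hY : forall s, Y s = 1 \/ Y s = -1)
  (V : 'M[R]_(2 * p, d.+1)) :
  differentiable (Loss X Y) V /\
  frob (gradM (Loss X Y) V) <= Num.sqrt ((2 * p)%:R) * Num.min (Loss X Y V) 1.
Proof.
have PDL := Loss_PD hp X Y V.
split; first by case: (PDL 0).
set h : R := p%:R^-1.
have h0 : 0 < h by rewrite invr_gt0 ltr0n.
set e := fun s => expR (- (Y s * fV V (X s))).
set c := fun s => (1 + e s)^-1 * e s.
have e0 : forall s, 0 < e s by move=> s; apply: expR_gt0.
have c0 : forall s, 0 <= c s.
  by move=> s; apply: mulr_ge0; [rewrite invr_ge0 ltW // addr_gt0 | apply: ltW].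
set a := fun i s => \sum_(j < d.+1) V i j * X s 0 j.
set w := fun i s => n%:R^-1 * (c s * (- Y s * (uw R i * gh h (a i s)))).
have Gij : forall i j, gradM (Loss X Y) V i j = \sum_s w i s * X s 0 j.
  move=> i j; rewrite mxE; case: (PDL (delta_mx i j)) => _ ->.
  rewrite mulr_sumr; apply: eq_bigr => s _.
  have E : \sum_(i' < 2 * p) uw R i' * (gh (p%:R^-1) (\sum_(j' < d.+1) V i' j' * X s 0 j')
      * \sum_(j' < d.+1) (delta_mx i j : 'M[R]_(2 * p, d.+1)) i' j' * X s 0 j')
      = uw R i * (gh h (a i s) * X s 0 j).
    rewrite (bigD1 i) //= [X in _ + X]big1 ?addr0.
      by rewrite sum_delta eqxx mul1r.
    by move=> i' ni; rewrite sum_delta (negbTE ni) mul0r !mulr0.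
  rewrite E /w /c /e /a; ring.
have Mb0 : 0 <= n%:R^-1 * \sum_s c s.
  by apply: mulr_ge0; [rewrite invr_ge0 | apply: sumr_ge0].
have wb : forall i, \sum_s `|w i s| <= n%:R^-1 * \sum_s c s.
  move=> i; rewrite mulr_sumr; apply: ler_sum => s _.
  rewrite /w !normrM normrN.
  have -> : `|Y s| = 1 by case: (hY s) => ->; rewrite ?normrN normr1.
  have -> : `|uw R i| = 1 by rewrite /uw; case: ifP => _; rewrite ?normrN normr1.
  have /andP[g0 g1] := gh_bound (a i s) h0.
  have ie : 0 <= (1 + e s)^-1 by rewrite invr_ge0 ltW // addr_gt0.
  have ni : 0 <= n%:R^-1 :> R by rewrite invr_ge0.
  rewrite !mul1r (ger0_norm g0) (ger0_norm (ltW (e0 s))) (ger0_norm ie) (ger0_norm ni).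
  apply: ler_wpM2l; first by rewrite invr_ge0.
  rewrite -[leRHS]mulr1; apply: ler_wpM2l; [exact: c0 | exact: g1].
have hx : forall s, \sum_(j < d.+1) X s 0 j ^+ 2 = 1.
  move=> s; have := hX s; rewrite /frob big_ord1 => H.
  have := @sqr_sqrtr R (\sum_(j < d.+1) X s 0 j ^+ 2) (sumr_ge0 _ (fun j _ => sqr_ge0 _)).
  by rewrite H expr1n.
have rowb : forall i, \sum_j gradM (Loss X Y) V i j ^+ 2 <= (n%:R^-1 * \sum_s c s) ^+ 2.
  move=> i.
  under eq_bigr => j _ do rewrite Gij.
  have rb := @row_bound R n d.+1 (w i) (fun s j => X s 0 j) hx; simpl in rb.
  apply: le_trans rb _.
  have := wb i; have := sumr_ge0 (index_enum _) (fun s (_ : true) => normr_ge0 (w i s)).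
  move: (n%:R^-1 * _) => M; set u := \sum_s _; nra.
rewrite /frob.
apply: (@le_trans _ _ (Num.sqrt ((2 * p)%:R * (n%:R^-1 * \sum_s c s) ^+ 2))).

  rewrite ler_sqrt; last by apply: mulr_ge0 => //; apply: sqr_ge0.
  apply: le_trans (ler_sum _ (fun i _ => rowb i)) _.
  by rewrite sumr_const card_ord mulr_natl.
rewrite sqrtrM // sqrtr_sqr (ger0_norm Mb0).
apply: ler_wpM2l; first exact: sqrtr_ge0.
rewrite le_min; apply/andP; split.
  rewrite /Loss; apply: ler_wpM2l; first by rewrite invr_ge0.
  by apply: ler_sum => s _; apply: ln_bound.
have : \sum_s c s <= \sum_(s < n) (1 : R) by apply: ler_sum => s _; apply: c_le1.
rewrite sumr_const card_ord => H.
have n0 : 0 < n%:R :> R by rewrite ltr0n.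
rewrite mulrC ler_pdivrMr // mul1r.
exact: H.
Qed.
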